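(* Let $\mathscr{X}$ be a finite nonempty set of possible samples, and identify a dataset with its vector of multiplicities $\mathcal{D}\in\mathbb{N}^{|\mathscr{X}|}$, so that $\|\mathcal{D}\|_1$ is its number of samples and $\|\mathcal{D}-\mathcal{D}'\|_1$ is the distance between two datasets. Let $\Lambda\in\mathbb{N}^*$ be a minimum support, let $\beta>0$, and let $\mathcal{D}\in\mathbb{N}^{|\mathscr{X}|}$ with $\|\mathcal{D}\|_1\ge \Lambda$. Define $$g:\mathbb{R}^+\to[0,1],\qquad g(x)=1-\Big(\frac{x}{x+1}\Big)^2-\Big(\frac{1}{x+1}\Big)^2,$$ and $$\xi_{\mathcal{D},\beta}:\mathbb{N}\to\mathbb{R}^+,\qquad \xi_{\mathcal{D},\beta}(k)=e^{-k\beta}\, g\big(\max(\Lambda,\|\mathcal{D}\|_1-k)\big).$$ Let $t=\|\mathcal{D}\|_1-\dfrac{1-\beta-\sqrt{(1-\beta)^2-4\beta}}{2\beta}$ when this expression is well defined (i.e. $(1-\beta)^2-4\beta\ge 0$ and the resulting value is $\ge 0$), and $t=0$ otherwise. Then the smooth sensitivity of the Gini impurity at $\mathcal{D}$ (as defined in the context) satisfies $$S^*_{\mathcal{G},\beta}(\mathcal{D})=\max\Big[\xi_{\mathcal{D},\beta}(0),\ \xi_{\mathcal{D},\beta}(\lfloor t\rfloor),\ \xi_{\mathcal{D},\beta}(\lceil t\rceil),\ \xi_{\mathcal{D},\beta}(\|\mathcal{D}\|_1-\Lambda)\Big].$$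
   Context: Setting: binary classification with a rule being evaluated on the dataset $\mathcal{D}$ of samples remaining to be classified. The local sensitivity of the Gini impurity at a dataset $\mathcal{D}'$ is $LS_{\mathcal{G}}(\mathcal{D}')=g(\|\mathcal{D}'\|_1)$ with $g$ as in the claim. Given the minimum support $\Lambda$ (only datasets with at least $\Lambda$ samples are considered), define for $k\in\mathbb{N}$ $$\mathcal{T}_k(\mathcal{D})=\max\{LS_{\mathcal{G}}(\mathcal{D}') : \mathcal{D}'\in\mathbb{N}^{|\mathscr{X}|},\ \|\mathcal{D}'-\mathcal{D}\|_1\le k,\ \|\mathcal{D}'\|_1\ge\Lambda\},$$ and the smooth sensitivity of the Gini impurity as $S^*_{\mathcal{G},\beta}(\mathcal{D})=\max_{k\in\mathbb{N}} e^{-\beta k}\,\mathcal{T}_k(\mathcal{D})$. *)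

(* Defs.v *)
From mathcomp Require Import all_boot all_order all_algebra.
From mathcomp Require Import all_classical all_reals all_analysis.
Set Implicit Arguments. Unset Strict Implicit. Unset Printing Implicit Defensive.
Import Order.TTheory GRing.Theory Num.Theory.
Local Open Scope classical_set_scope.
Local Open Scope ring_scope.

Section GiniDefs.
Variables (R : realType) (T : finType).

(* A dataset is its vector of multiplicities D : T -> nat. *)
Definition dsize (D : T -> nat) : nat := (\sum_(x : T) D x)%N.

Definition ddist (D D' : T -> nat) : nat :=
  (\sum_(x : T) `|(D x)%:Z - (D' x)%:Z|)%N.

Definition gini_g (x : R) : R :=
  1 - (x / (x + 1)) ^+ 2 - (1 / (x + 1)) ^+ 2.

Definition LS_gini (D' : T -> nat) : R := gini_g (dsize D')%:R.

Definition Tk (Lambda : nat) (D : T -> nat) (k : nat) : R :=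
  sup [set LS_gini D' | D' in
        [set D' : T -> nat | (ddist D' D <= k)%N /\ (Lambda <= dsize D')%N]].

Definition smooth_sens (Lambda : nat) (beta : R) (D : T -> nat) : R :=
  sup [set expR (- beta * k%:R) * Tk Lambda D k | k in [set: nat]].

Definition xi (Lambda : nat) (beta : R) (D : T -> nat) (k : nat) : R :=
  expR (- (k%:R * beta)) *
    gini_g (Num.max (Lambda%:R) ((dsize D)%:R - k%:R)).

Definition t_crit (beta : R) (D : T -> nat) : R :=
  let disc := (1 - beta) ^+ 2 - 4 * beta in
  let t := (dsize D)%:R - (1 - beta - Num.sqrt disc) / (2 * beta) in
  if (0 <= disc) && (0 <= t) then t else 0.

End GiniDefs.

(* Main.v *)
Require Import Defs.
From mathcomp Require Import all_boot all_order all_algebra.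
From mathcomp Require Import all_classical all_reals all_analysis.
From mathcomp Require Import zify ring lra.
Import Order.TTheory GRing.Theory Num.Theory.
Set Implicit Arguments. Unset Strict Implicit.
Local Open Scope classical_set_scope.
Local Open Scope ring_scope.

Lemma dist_pt (a b : nat) : (b <= a + `|(a%:Z - b%:Z)|)%N.
Proof. lia. Qed.

Lemma dist_le (a b : nat) : (a <= b)%N -> `|(a%:Z - b%:Z)|%N = (b - a)%N.
Proof. lia. Qed.




Lemma dsize_le_dist (T : finType) (D D' : T -> nat) : (dsize D <= dsize D' + ddist D' D)%N.
Proof.
rewrite /dsize /ddist -big_split /=.
by apply: leq_sum => x _; apply: dist_pt.
Qed.

Lemma ddist_sub (T : finType) (D D' : T -> nat) : (forall x, D' x <= D x)%N ->
  ddist D' D = (dsize D - dsize D')%N.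
Proof.
move=> H.
have E : (ddist D' D + dsize D' = dsize D)%N.
  rewrite /ddist /dsize -big_split /=; apply: eq_bigr => x _.
  rewrite dist_le ?H //; exact: subnK.
lia.
Qed.

Lemma exists_sub (T : finType) (j : nat) (D : T -> nat) : (j <= dsize D)%N ->
  exists D' : T -> nat, (forall x, D' x <= D x)%N /\ dsize D' = (dsize D - j)%N.
Proof.
elim: j => [|j IH] hj.
  by exists D; split => //; rewrite subn0.
have [D1 [H1 E1]] := IH (ltnW hj).
have : exists x, (0 < D1 x)%N.
  apply/existsP; apply: contraT; rewrite negb_exists => /forallP H0.
  have : dsize D1 = 0%N.
    by rewrite /dsize big1 // => x _; move: (H0 x); rewrite lt0n negbK => /eqP.
  lia.
case=> x0 Hx0.
exists (fun y => if y == x0 then (D1 x0).-1 else D1 y); split.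
  move=> y; case: eqP => [->|_]; last exact: H1.
  by apply: leq_trans (H1 x0); apply: leq_pred.
have E2 : dsize (fun y => if y == x0 then (D1 x0).-1 else D1 y) = ((D1 x0).-1 + \sum_(y | y != x0) D1 y)%N.
  rewrite /dsize (bigD1 x0) //= eqxx; congr (_ + _)%N.
  by apply: eq_bigr => y /negPf ->.
have E3 : dsize D1 = (D1 x0 + \sum_(y | y != x0) D1 y)%N by rewrite /dsize (bigD1 x0).
rewrite E2; lia.
Qed.

Lemma sup_max (R : realType) (E : set R) x : E x -> ubound E x -> sup E = x.
Proof.
move=> Ex ub; apply/le_anti/andP; split.
  by apply: ge_sup => //; exists x.
by apply: ub_le_sup => //; exists x.
Qed.

Lemma gini_gE (R : realType) (x : R) : 0 <= x -> gini_g x = 2 * x / (x + 1) ^+ 2.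
Proof.
move=> x0; rewrite /gini_g.
have h : x + 1 != 0 by rewrite gt_eqF // ltr_wpDl.
by field.
Qed.

Lemma gini_g_ge0 (R : realType) (x : R) : 0 <= x -> 0 <= gini_g x.
Proof.
move=> x0; rewrite gini_gE //; apply: divr_ge0; [lra|exact: sqr_ge0].
Qed.

Lemma gini_g_anti (R : realType) (a b : R) : 1 <= a -> a <= b -> gini_g b <= gini_g a.
Proof.
move=> a1 ab.
have a0 : 0 <= a by lra.
have b0 : 0 <= b by lra.
rewrite !gini_gE //.
have ha : 0 < (a + 1) ^+ 2 by apply: exprn_gt0; lra.
have hb : 0 < (b + 1) ^+ 2 by apply: exprn_gt0; lra.
rewrite ler_pdivrMr // mulrAC ler_pdivlMr //.
have : 0 <= (b - a) * (a * b - 1) by apply: mulr_ge0; nra.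
nra.
Qed.

Lemma Tk_val (R : realType) (T : finType) (Lambda : nat) (D : T -> nat) (k : nat) :
  (0 < Lambda)%N -> (Lambda <= dsize D)%N ->
  Tk R Lambda D k = gini_g ((maxn Lambda (dsize D - k))%:R : R).
Proof.
move=> L0 LD; rewrite /Tk; apply: sup_max.
  have hj : (dsize D - maxn Lambda (dsize D - k) <= dsize D)%N by lia.
  have [D' [H1 H2]] := exists_sub hj.
  exists D'; last by rewrite /LS_gini H2; congr (gini_g _%:R); lia.
  split; last by rewrite H2; lia.
  by rewrite ddist_sub // H2; lia.
move=> _ [D' [H1 H2] <-]; rewrite /LS_gini.
apply: gini_g_anti.
  by rewrite ler1n; lia.
rewrite ler_nat; have := dsize_le_dist D D'; lia.
Qed.
Definition Lf (R : realType) (b : R) (y : R) : R := b * y + ln y - 2 * ln (y + 1).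
Arguments Lf {R}.

Lemma Lf_derive (R : realType) (b y : R) : 0 < y ->
  is_derive y 1 (Lf b) (b + y^-1 - 2 * (y+1)^-1).
Proof.
move=> y0.
have h1 : is_derive y (1:R) (fun z : R => b * z) b.
  have := is_deriveZ b (@is_derive_id _ R y 1).
  by rewrite /GRing.scale /= mulr1.
have h2 : is_derive y (1:R) (@ln R \o shift 1) ((y+1)^-1).
  apply: is_derive_eq; first apply: is_derive1_comp.
  - apply: is_derive1_ln => /=. by rewrite ltr_wpDr // ltW.
  by rewrite addr0 mulr1.
have h3 : is_derive y (1:R) (fun z => 2 * (@ln R \o shift 1) z) (2 * (y+1)^-1).
  have := is_deriveZ 2 h2.
  by rewrite /GRing.scale /=.
have h4 := is_deriveB (is_deriveD h1 (is_derive1_ln y0)) h3.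
have -> : Lf b = (fun z => b * z) + @ln R - (fun z => 2 * (@ln R \o shift 1) z).
  by apply/funext => z /=; rewrite /Lf.
exact: h4.
Qed.

Definition qf (R : realType) (b y : R) : R := b * y ^+ 2 + (b - 1) * y + 1.
Arguments qf {R}.

Lemma Lf_deriv_eq (R : realType) (b y : R) : 0 < y ->
  b + y^-1 - 2 * (y+1)^-1 = qf b y / (y * (y + 1)).
Proof.
move=> y0; have h1 : y != 0 by rewrite gt_eqF.
have h2 : y + 1 != 0 by rewrite gt_eqF // ltr_wpDr // ltW.
rewrite /qf; field; exact/andP.
Qed.

Lemma Lf_mono (R : realType) (b a c : R) : 0 < a -> a <= c ->
  (forall y, a < y -> y < c -> 0 <= qf b y) -> Lf b a <= Lf b c.
Proof.
move=> a0 ac hq.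
have der : forall x, 0 < x -> derivable (Lf b) x 1.
  by move=> x x0; have [] := Lf_derive b x0.
apply: (@ger0_derive1_ndecr R (Lf b) a c) => //.
- move=> x; rewrite in_itv /= => /andP[ax _]; apply: der; exact: lt_trans ax.
- move=> x; rewrite in_itv /= => /andP[ax xc].
  have x0 : 0 < x by exact: lt_trans ax.
  rewrite derive1E; have [_ ->] := Lf_derive b x0.
  rewrite Lf_deriv_eq //; apply: divr_ge0; first exact: hq.
  by apply: mulr_ge0; apply: ltW => //; rewrite ltr_wpDr // ltW.
- apply: derivable_within_continuous => x; rewrite in_itv /= => /andP[ax _].
  by apply: der; exact: lt_le_trans ax.
Qed.

Lemma Lf_anti (R : realType) (b a c : R) : 0 < a -> a <= c ->
  (forall y, a < y -> y < c -> qf b y <= 0) -> Lf b c <= Lf b a.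
Proof.
move=> a0 ac hq.
have der : forall x, 0 < x -> derivable (Lf b) x 1.
  by move=> x x0; have [] := Lf_derive b x0.
apply: (@ler0_derive1_nincr R (Lf b) a c) => //.
- move=> x; rewrite in_itv /= => /andP[ax _]; apply: der; exact: lt_trans ax.
- move=> x; rewrite in_itv /= => /andP[ax xc].
  have x0 : 0 < x by exact: lt_trans ax.
  rewrite derive1E; have [_ ->] := Lf_derive b x0.
  rewrite Lf_deriv_eq //; apply: mulr_le0_ge0; first exact: hq.
  by rewrite invr_ge0; apply: mulr_ge0; apply: ltW => //; rewrite ltr_wpDr // ltW.
- apply: derivable_within_continuous => x; rewrite in_itv /= => /andP[ax _].
  by apply: der; exact: lt_le_trans ax.
Qed.

Lemma expR_Lf (R : realType) (b y : R) : 0 < y ->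
  expR (Lf b y) = expR (b * y) * y / (y + 1) ^+ 2.
Proof.
move=> y0; have y1 : 0 < y + 1 by rewrite ltr_wpDr // ltW.
rewrite /Lf.
have -> : 2 * ln (y + 1) = ln (y + 1) + ln (y + 1) by ring.
rewrite expRB expRD !lnK ?posrE //.
by rewrite expRD lnK ?posrE // expr2 mulrA.
Qed.

Section XI.
Variables (R : realType) (T : finType) (Lambda : nat) (b : R) (D : T -> nat).
Hypothesis L0 : (0 < Lambda)%N.
Hypothesis b0 : 0 < b.
Hypothesis LD : (Lambda <= dsize D)%N.

Lemma xi_Lf (k : nat) : (k <= dsize D - Lambda)%N ->
  xi Lambda b D k = 2 * expR (- ((dsize D)%:R * b)) *
     expR (Lf b ((dsize D)%:R - k%:R)).
Proof.
move=> hk.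
set N := (dsize D)%:R; set y := N - k%:R.
have yL : Lambda%:R <= y.
  have hkn : (k <= dsize D)%N by lia.
  by rewrite /y /N -natrB // ler_nat; lia.
have y0 : 0 < y by apply: lt_le_trans yL; rewrite ltr0n.
rewrite /xi (max_r yL) -/N -/y gini_gE ?ltW // expR_Lf //.
have -> : expR (- (k%:R * b)) = expR (- (N * b)) * expR (b * y).
  by rewrite -expRD /y; congr expR; ring.
by rewrite !mulrA [_ * 2]mulrC !mulrA.
Qed.

Lemma xi_mono (k k' : nat) : (k <= dsize D - Lambda)%N -> (k' <= dsize D - Lambda)%N ->
  Lf b ((dsize D)%:R - k%:R) <= Lf b ((dsize D)%:R - k'%:R) ->
  xi Lambda b D k <= xi Lambda b D k'.
Proof.
move=> hk hk' hL; rewrite !xi_Lf //; apply: ler_wpM2l.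
  by apply: mulr_ge0 => //; apply: ltW; apply: expR_gt0.
by rewrite ler_expR.
Qed.

Lemma xi_tail (k : nat) : (dsize D - Lambda <= k)%N ->
  xi Lambda b D k <= xi Lambda b D (dsize D - Lambda).
Proof.
move=> hk; rewrite /xi.
have h1 : (dsize D)%:R - k%:R <= Lambda%:R :> R.
  by rewrite lerBlDr -natrD ler_nat; lia.
have h2 : (dsize D)%:R - (dsize D - Lambda)%:R <= Lambda%:R :> R.
  by rewrite natrB // opprB addrCA subrr addr0.
rewrite (max_l h1) (max_l h2); apply: ler_wpM2r.
  by apply: gini_g_ge0; rewrite ler0n.
rewrite ler_expR lerN2; apply: ler_wpM2r; first exact: ltW.
by rewrite ler_nat.
Qed.

Lemma maxE (k : nat) : ((maxn Lambda (dsize D - k))%:R : R) =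
  Num.max Lambda%:R ((dsize D)%:R - k%:R).
Proof.
have [h|h] := leqP (dsize D - k) Lambda.
  rewrite max_l //.
  by rewrite lerBlDr -natrD ler_nat; lia.
have hkn : (k <= dsize D)%N by lia.
rewrite (natrB R hkn) max_r //.
by rewrite -(natrB R hkn) ler_nat; lia.
Qed.

Lemma xi_eq (k : nat) :
  expR (- b * k%:R) * Tk R Lambda D k = xi Lambda b D k.
Proof.
by rewrite Tk_val // /xi mulNr [k%:R * _]mulrC maxE.
Qed.
End XI.

Lemma floor_spec (R : realType) (x : R) (m : nat) : 0 <= x ->
  (m <= `|Num.floor x|)%N = (m%:R <= x).
Proof.
move=> x0.
have f0 : (0 <= Num.floor x)%R by rewrite floor_ge0.
rewrite -lez_nat gez0_abs // floor_ge_int.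
by [].
Qed.

Lemma ceil_spec (R : realType) (x : R) (m : nat) : 0 <= x ->
  (`|Num.ceil x| <= m)%N = (x <= m%:R).
Proof.
move=> x0.
have f0 : (0 <= Num.ceil x)%R by rewrite ceil_ge0; lra.
rewrite -lez_nat gez0_abs // ceil_le_int.
by [].
Qed.

Lemma max_or (R : realType) (x y : R) : Num.max x y = x \/ Num.max x y = y.
Proof. by case: (leP x y) => h; [right|left]. Qed.

Unset Implicit Arguments.
Local Close Scope classical_set_scope.

Theorem theorem1 (R : realType) (T : finType) (Lambda : nat) (beta : R)
    (D : T -> nat) :
  (0 < #|T|)%N -> (0 < Lambda)%N -> 0 < beta -> (Lambda <= dsize D)%N ->
  smooth_sens Lambda beta D =
  Num.max (Num.max (xi Lambda beta D 0)
                   (xi Lambda beta D `|Num.floor (t_crit beta D)|%N))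
          (Num.max (xi Lambda beta D `|Num.ceil (t_crit beta D)|%N)
                   (xi Lambda beta D (dsize D - Lambda)%N)).
Proof.
move=> T0 L0 b0 LD.
set kf := `|Num.floor (t_crit beta D)|%N.
set kc := `|Num.ceil (t_crit beta D)|%N.
set M := Num.max _ _.
have M0 : xi Lambda beta D 0 <= M by rewrite /M !le_max lexx.
have Mf : xi Lambda beta D kf <= M by rewrite /M !le_max lexx !orbT.
have Mc : xi Lambda beta D kc <= M by rewrite /M !le_max lexx !orbT.
have ML : xi Lambda beta D (dsize D - Lambda) <= M by rewrite /M !le_max lexx !orbT.
have key : forall k, xi Lambda beta D k <= M.
  move=> k.
  case: (leqP (dsize D - Lambda) k) => hk.
    exact: le_trans (xi_tail L0 b0 LD hk) ML.
  have hk' := ltnW hk.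
  set N : R := (dsize D)%:R.
  set y := N - k%:R.
  have yL : Lambda%:R <= y.
    have hkn : (k <= dsize D)%N by lia.
    by rewrite /y /N -(natrB R hkn) ler_nat; lia.
  have L1 : 1 <= (Lambda%:R : R) by rewrite ler1n.
  have y0 : 0 < y by lra.
  have yN : y <= N by rewrite /y lerBlDr lerDl ler0n.
  have mono0 : Lf beta y <= Lf beta N -> xi Lambda beta D k <= M.
    move=> h; apply: le_trans M0; apply: xi_mono => //.
    by rewrite mulr0n subr0.
  set disc := (1 - beta) ^+ 2 - 4 * beta.
  case: (ltP disc 0) => hd.
    apply: mono0; apply: Lf_mono => // z _ _.
    have e : 4 * beta * qf beta z = (2 * beta * z + beta - 1) ^+ 2 - disc.
      by rewrite /qf /disc; ring.
    have : 0 <= 4 * beta * qf beta z.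
      by rewrite e; have := sqr_ge0 (2 * beta * z + beta - 1); lra.
    by rewrite pmulr_rge0 // mulr_gt0.
  set s := Num.sqrt disc.
  have s0 : 0 <= s by apply: sqrtr_ge0.
  have s2 : s ^+ 2 = disc by rewrite sqr_sqrtr.
  set y1 := (1 - beta - s) / (2 * beta).
  set y2 := (1 - beta + s) / (2 * beta).
  have bne : beta != 0 by rewrite gt_eqF.
  have qfact : forall z, qf beta z = beta * ((z - y1) * (z - y2)).
    move=> z.
    have e : beta * ((z - y1) * (z - y2)) =
       beta * z ^+ 2 + (beta - 1) * z + ((1 - beta) ^+ 2 - s ^+ 2) / (4 * beta).
      by rewrite /y1 /y2; field.
    by rewrite e s2 /disc /qf; field.
  have y12 : y1 <= y2.
    rewrite /y1 /y2 ler_pM2r ?invr_gt0 ?mulr_gt0 //; lra.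
  have qpos : forall z, (z <= y1) || (y2 <= z) -> 0 <= qf beta z.
    move=> z /orP[] hz; rewrite qfact; apply: mulr_ge0; try exact: ltW.
      by apply: mulr_le0; lra.
    by apply: mulr_ge0; lra.
  have qneg : forall z, y1 <= z -> z <= y2 -> qf beta z <= 0.
    move=> z h1 h2; rewrite qfact; apply: mulr_ge0_le0; first exact: ltW.
    by apply: mulr_ge0_le0; lra.
  set t := N - y1.
  case: (ltP t 0) => ht.
    apply: mono0; apply: Lf_mono => // z _ hz.
    by apply: qpos; apply/orP; left; rewrite /t in ht; lra.
  have tcE : t_crit beta D = t.
    by rewrite /t_crit -/N -/disc -/s -/y1 -/t hd ht.
  have tc0 : 0 <= t_crit beta D by rewrite tcE.
  case: (lerP t k%:R) => htk.
    have hkc : (kc <= k)%N by rewrite /kc ceil_spec // tcE.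
    have hkc2 : t <= kc%:R by rewrite -tcE -ceil_spec.
    apply: le_trans Mc; apply: xi_mono => //.
      exact: leq_trans hkc hk'.
    apply: Lf_mono => //.
      by rewrite /y lerB // ler_nat.
    move=> z _ hz; apply: qpos; apply/orP; left.
    rewrite /t in hkc2; lra.
  have hkf : (k <= kf)%N by rewrite /kf floor_spec // tcE ltW.
  have hkf2 : kf%:R <= t by rewrite -tcE -floor_spec.
  case: (lerP y2 y) => hy2.
    apply: mono0; apply: Lf_mono => // z hz _.
    by apply: qpos; apply/orP; right; lra.
  case: (lerP (Lambda%:R) y1) => hy1.
    have kfL : (kf <= dsize D - Lambda)%N.
      have : (kf + Lambda)%:R <= N :> R by rewrite natrD; rewrite /t in hkf2; lra.
      rewrite /N ler_nat => h; rewrite leq_subRL; first by rewrite addnC.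
      exact: leq_trans (leq_addl kf Lambda) h.
    apply: le_trans Mf; apply: xi_mono => //.
    rewrite -/N -/y.
    apply: Lf_anti.
    - rewrite /t in hkf2; lra.
    - by rewrite /y lerB // ler_nat.
    - move=> z h1 h2; apply: qneg.
        rewrite /t in hkf2; lra.
      lra.
  apply: le_trans ML; apply: xi_mono => //.
  have hLn : (Lambda <= dsize D)%N by [].
  rewrite (natrB R hLn) opprB addrCA subrr addr0 -/N -/y.
  apply: Lf_anti => //.
  - lra.
  - move=> z h1 h2; apply: qneg; lra.
rewrite /smooth_sens; apply: sup_max.
  have [E1|E1] := max_or (Num.max (xi Lambda beta D 0) (xi Lambda beta D kf))
                         (Num.max (xi Lambda beta D kc) (xi Lambda beta D (dsize D - Lambda))).
    have [E2|E2] := max_or (xi Lambda beta D 0) (xi Lambda beta D kf).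
      by exists 0%N => //; rewrite xi_eq // /M E1 E2.
    by exists kf => //; rewrite xi_eq // /M E1 E2.
  have [E2|E2] := max_or (xi Lambda beta D kc) (xi Lambda beta D (dsize D - Lambda)).
    by exists kc => //; rewrite xi_eq // /M E1 E2.
  by exists (dsize D - Lambda)%N => //; rewrite xi_eq // /M E1 E2.
move=> _ [k _ <-]; rewrite xi_eq //; exact: key.
Qed.
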